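(* Let $\Omega=\{\rho<0\}\subset\mathbb{C}^n$, $n\ge2$, be a strongly convex domain with $0\in\partial\Omega$ whose $C^3$ defining function has near $0$ the form $$\rho(z)=2\,\mathrm{Re}(z_n)+\sum_{j,k=1}^nA_{jk}z_j\bar z_k+O(|z|^3)$$ with the Hermitian form $\sum A_{jk}z_j\bar z_k$ positive definite. Then there exist constants $c,\varepsilon_0>0$ such that for $0<\eta,\varepsilon<\varepsilon_0$: $$D^e(0,\eta,\varepsilon)\subset D_0(c\eta,c\varepsilon),\qquad D_0(\eta,\varepsilon)\subset D^e(0,c\eta,c\varepsilon).$$
   Context: $D_0(\eta,\varepsilon)=\{\tau\in\mathbb{C}^n\setminus\Omega:|\tau_1|^2+\dots+|\tau_{n-1}|^2<\eta\,\mathrm{Re}(\tau_n),\ |\mathrm{Im}(\tau_n)|<\eta\,\mathrm{Re}(\tau_n),\ |\mathrm{Re}(\tau_n)|<\varepsilon\}$. External Korányi region: with $\langle\partial\rho(\xi),w\rangle=\sum_k\frac{\partial\rho}{\partial\xi_k}(\xi)w_k$, $n(\xi)=\bar\partial\rho(\xi)/|\bar\partial\rho(\xi)|$, $T_\xi=\{w:\langle\partial\rho(\xi),\xi-w\rangle=0\}$, and $\tau=w+t\,n(\xi)$ the unique decomposition with $w\in T_\xi$, $t\in\mathbb{C}$, $D^e(\xi,\eta,\varepsilon)=\{\tau\in\mathbb{C}^n\setminus\Omega:|w-\xi|<\sqrt{\eta\rho(\tau)},\ |\mathrm{Im}\,t|<\eta\rho(\tau),\ \rho(\tau)<\varepsilon\}$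 (for $\xi=0$ here: $w=(\tau_1,\dots,\tau_{n-1},0)$, $t=\tau_n$). *)

(* Defs.v *)
From HB Require Import structures.
From mathcomp Require Import all_boot all_order all_algebra.
From mathcomp Require Import all_classical all_reals all_analysis.
From mathcomp Require Import complex.
Set Implicit Arguments. Unset Strict Implicit. Unset Printing Implicit Defensive.
Import Order.TTheory GRing.Theory Num.Theory.
Import numFieldNormedType.Exports.
Local Open Scope ring_scope.
Local Open Scope classical_set_scope.

Section Defs.
Variables (R : realType) (n : nat).

(* C^n, realised as the real normed space R^n x R^n : z = (x, y), z_j = x_j + i y_j *)
Definition Cn := ('rV[R]_n * 'rV[R]_n)%type.

(* j-th complex coordinate (0-based: the paper's z_{j+1}) *)
Definition zc (z : Cn) (j : 'I_n) : R[i] := Complex (z.1 0 j) (z.2 0 j).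
(* coordinate by a nat index k (0 if k >= n); the paper's z_n is zk z n.-1 *)
Definition zk (z : Cn) (k : nat) : R[i] := oapp (zc z) 0 (insub k).
Definition mkCn (f : 'I_n -> R[i]) : Cn :=
  (\row_j complex.Re (f j), \row_j complex.Im (f j)).

Definition cabs2 (w : R[i]) : R := complex.Re w ^+ 2 + complex.Im w ^+ 2.
Definition enorm (z : Cn) : R := Num.sqrt (\sum_j cabs2 (zc z j)).

Definition herm (A : 'M[R[i]]_n) (z : Cn) : R[i] :=
  \sum_j \sum_k A j k * zc z j * conjc (zc z k).
Definition is_hermitian (A : 'M[R[i]]_n) := forall j k, A j k = conjc (A k j).
Definition posdef_herm (A : 'M[R[i]]_n) :=
  forall z : Cn, z != 0 -> 0 < complex.Re (herm A z).

Fixpoint Ck (k : nat) (f : Cn -> R) : Prop :=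
  match k with
  | 0 => continuous f
  | k.+1 => (forall x v : Cn, derivable f x v) /\
            (forall v : Cn, Ck k (fun x => 'D_v f x))
  end.

Definition ex (j : 'I_n) : Cn := mkCn (fun k => if k == j then 1 else 0).
Definition ey (j : 'I_n) : Cn := mkCn (fun k => if k == j then Complex 0 1 else 0).
(* Wirtinger derivatives d rho / d z_k and d rho / d zbar_k *)
Definition dz (rho : Cn -> R) (xi : Cn) (k : 'I_n) : R[i] :=
  Complex ('D_(ex k) rho xi / 2) (- ('D_(ey k) rho xi / 2)).
Definition dzb (rho : Cn -> R) (xi : Cn) (k : 'I_n) : R[i] := conjc (dz rho xi k).
Definition pair_drho (rho : Cn -> R) (xi w : Cn) : R[i] :=
  \sum_k dz rho xi k * zc w k.
Definition norm_dzb (rho : Cn -> R) (xi : Cn) : R :=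
  Num.sqrt (\sum_k cabs2 (dzb rho xi k)).
Definition nvec (rho : Cn -> R) (xi : Cn) : Cn :=
  mkCn (fun k => dzb rho xi k / (norm_dzb rho xi)%:C%C).
(* decomposition tau = w + t n(xi), w in T_xi = {w | <d rho(xi), xi - w> = 0}:
   t = <d rho(xi), tau - xi> / <d rho(xi), n(xi)>,  w = tau - t n(xi) *)
Definition tdec (rho : Cn -> R) (xi tau : Cn) : R[i] :=
  pair_drho rho xi (tau - xi) / pair_drho rho xi (nvec rho xi).
Definition wdec (rho : Cn -> R) (xi tau : Cn) : Cn :=
  tau - mkCn (fun k => tdec rho xi tau * zc (nvec rho xi) k).

Definition Omega (rho : Cn -> R) : set Cn := [set z | rho z < 0].

Definition D0 (rho : Cn -> R) (eta eps : R) : set Cn :=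
  [set tau | ~ Omega rho tau /\
     \sum_(k < n.-1) cabs2 (zk tau k) < eta * complex.Re (zk tau n.-1) /\
     `|complex.Im (zk tau n.-1)| < eta * complex.Re (zk tau n.-1) /\
     `|complex.Re (zk tau n.-1)| < eps].

Definition De (rho : Cn -> R) (xi : Cn) (eta eps : R) : set Cn :=
  [set tau | ~ Omega rho tau /\
     enorm (wdec rho xi tau - xi) < Num.sqrt (eta * rho tau) /\
     `|complex.Im (tdec rho xi tau)| < eta * rho tau /\
     rho tau < eps].

Definition strongly_convex_domain (rho : Cn -> R) :=
  [/\ connected (Omega rho),
      (exists B : R, forall z, Omega rho z -> enorm z <= B),
      (forall p, rho p = 0 -> exists v, 'D_v rho p != 0) &
      (forall p v, rho p = 0 -> v != 0 -> 'D_v rho p = 0 ->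
                   0 < 'D_v ('D_v rho) p)].
End Defs.

(* Main.v *)
Require Import Defs.
From HB Require Import structures.
From mathcomp Require Import all_boot all_order all_algebra.
From mathcomp Require Import all_classical all_reals all_analysis.
From mathcomp Require Import complex.
From mathcomp Require Import ring lra.
Import Order.TTheory GRing.Theory Num.Theory.
Import numFieldNormedType.Exports.
Local Open Scope ring_scope.
Local Open Scope classical_set_scope.
Set Implicit Arguments.
Unset Strict Implicit.

Section S.
Variables (R : realType) (n : nat).
Implicit Types (z v : Cn R n).

Lemma zcZ (h : R) z j : zc (h *: z) j = Complex (h * z.1 0 j) (h * z.2 0 j).
Proof. by rewrite /zc /= !mxE. Qed.

Lemma cabs2_ge0 (w : R[i]) : 0 <= cabs2 w.
Proof. by rewrite /cabs2 addr_ge0 // sqr_ge0. Qed.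

Lemma enormZ (h : R) z : enorm (h *: z) = `|h| * enorm z.
Proof.
rewrite /enorm.
under eq_bigr => j _ do rewrite zcZ /cabs2 /= !exprMn -mulrDr.
by rewrite -mulr_sumr sqrtrM ?sqr_ge0 // sqrtr_sqr.
Qed.

Lemma enorm_ge0 z : 0 <= enorm z.
Proof. exact: sqrtr_ge0. Qed.

Lemma cabs2_le (w : R[i]) : complex.Re w ^+ 2 <= cabs2 w /\ complex.Im w ^+ 2 <= cabs2 w.
Proof. by rewrite /cabs2 lerDl lerDr !sqr_ge0. Qed.

Lemma cabs2_le_sum z j : cabs2 (zc z j) <= \sum_k cabs2 (zc z k).
Proof.
rewrite (bigD1 j) //= lerDl sumr_ge0 // => *; exact: cabs2_ge0.
Qed.

Lemma sum_ge0 z : 0 <= \sum_k cabs2 (zc z k).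
Proof. by rewrite sumr_ge0 // => *; exact: cabs2_ge0. Qed.

Lemma coord_le z j : `|z.1 0 j| <= enorm z /\ `|z.2 0 j| <= enorm z.
Proof.
have [h1 h2] := cabs2_le (zc z j).
rewrite /enorm -!sqrtr_sqr; split; rewrite ler_sqrt ?sum_ge0 //;
  apply: le_trans (cabs2_le_sum z j); done.
Qed.
Lemma D_lin (f L : Cn R n -> R) K r : 0 < r -> f 0 = 0 ->
  (forall (h : R) v, L (h *: v) = h * L v) ->
  (forall z, enorm z < r -> `|f z - L z| <= K * enorm z ^+ 2) ->
  forall v, 'D_v f 0 = L v.
Proof.
move=> r0 f0 LZ fb v; rewrite /derive; apply: cvg_lim => //.
apply/cvgrPdist_le => e e0.
set E := enorm v.
have E0 : 0 <= E := enorm_ge0 v.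
have d0 : 0 < Order.min (r / (E + 1)) (e / (`|K| * E ^+ 2 + 1)).
  by rewrite lt_min !divr_gt0 // ?ltr_wpDl ?mulr_ge0 ?sqr_ge0.
near=> h.
have hn0 : h != 0 by near: h; exact: nbhs_dnbhs_neq.
have hd : `|h| < Order.min (r / (E + 1)) (e / (`|K| * E ^+ 2 + 1)).
  by near: h; exact: dnbhs0_lt.
rewrite /= !addr0 f0 subr0.
have hp : 0 < `|h| by rewrite normr_gt0.
move: hd; rewrite lt_min => /andP [h1 h2].
have hE : enorm (h *: v) < r.
  rewrite enormZ; move: h1; rewrite ltr_pdivlMr ?ltr_wpDl // => h1.
  apply: le_lt_trans h1; rewrite ler_wpM2l // lerDl //.
have := fb _ hE; rewrite LZ enormZ => hb.
have -> : L v - h^-1 *: f (h *: v) = h^-1 * (h * L v - f (h *: v)).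
  by rewrite mulrBr mulKf.
rewrite normrM normfV distrC.
rewrite ler_pdivrMl //.
apply: le_trans hb _.
rewrite exprMn mulrA (mulrC K) -mulrA expr2 -mulrA ler_wpM2l //.
move: h2; rewrite ltr_pdivlMr; last by rewrite ltr_wpDl ?mulr_ge0 ?sqr_ge0.
move=> h2; apply: le_trans (ltW h2).
rewrite mulrDr mulr1 -[X in X <= _]addr0 lerD //.
by rewrite ler_wpM2l // ler_wpM2r ?sqr_ge0 // ler_norm.
Unshelve. all: by end_near.
Qed.
Lemma ReD (x y : R[i]) : complex.Re (x + y) = complex.Re x + complex.Re y.
Proof. by case: x; case: y. Qed.

Lemma Re_sum I (r : seq I) (P : pred I) (F : I -> R[i]) :
  complex.Re (\sum_(i <- r | P i) F i) = \sum_(i <- r | P i) complex.Re (F i).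
Proof. by apply: (big_morph _ ReD). Qed.

Lemma bnd2 (x y E : R) : `|x| <= E -> `|y| <= E -> `|x * y| <= E ^+ 2.
Proof. by move=> hx hy; rewrite normrM expr2 ler_pM. Qed.

Lemma term_bnd (a1 a2 w1 w2 u1 u2 E : R) :
  `|w1| <= E -> `|w2| <= E -> `|u1| <= E -> `|u2| <= E ->
  `|a1 * (w1 * u1 + w2 * u2) + a2 * (w1 * u2 - w2 * u1)| <=
    2 * (`|a1| + `|a2|) * E ^+ 2.
Proof.
move=> h1 h2 h3 h4.
apply: le_trans (ler_normD _ _) _.
rewrite !normrM mulrDr mulrDl.
have E2 : 0 <= E ^+ 2 by rewrite sqr_ge0.
have e2 : forall t : R, 2 * t * E ^+ 2 = t * (E ^+ 2 + E ^+ 2) by move=> t; ring.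
apply: lerD; rewrite e2 ler_wpM2l //.
  by apply: le_trans (ler_normD _ _) _; rewrite lerD // bnd2.
by apply: le_trans (ler_normB _ _) _; rewrite lerD // bnd2.
Qed.

Lemma herm_bnd (A : 'M[R[i]]_n) : exists KA : R, 0 <= KA /\ forall z,
  `|complex.Re (herm A z)| <= KA * enorm z ^+ 2.
Proof.
exists (\sum_j \sum_k 2 * (`|complex.Re (A j k)| + `|complex.Im (A j k)|)).
split; first by rewrite !sumr_ge0 // => *; rewrite !sumr_ge0 // => *;
  rewrite mulr_ge0 ?addr_ge0.
move=> z; rewrite /herm Re_sum mulr_suml.
apply: le_trans (ler_norm_sum _ _ _) _; apply: ler_sum => j _.
rewrite Re_sum mulr_suml.
apply: le_trans (ler_norm_sum _ _ _) _; apply: ler_sum => k _.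
have [h1 h2] := coord_le z j; have [h3 h4] := coord_le z k.
move: h1 h2 h3 h4; rewrite /zc; case: (A j k) => a1 a2 /=.
move=> h1 h2 h3 h4.
set w1 := z.1 0 j; set w2 := z.2 0 j; set u1 := z.1 0 k; set u2 := z.2 0 k.
have -> : (a1 * w1 - a2 * w2) * u1 - (a1 * w2 + a2 * w1) * - u2 =
   a1 * (w1 * u1 + w2 * u2) + a2 * (w1 * u2 - w2 * u1) by ring.
exact: term_bnd.
Qed.
End S.
Section S2.
Variable R : realType.

Lemma incl2 (K r eps0 eta eps x y S rho E2 : R) :
  0 < K -> 0 < eps0 -> eps0 <= 1 -> 2 * eps0 <= r -> 8 * K * eps0 <= 1 ->
  0 < eta -> eta < eps0 -> 0 < eps -> eps < eps0 ->
  0 <= S -> E2 = S + x ^+ 2 + y ^+ 2 -> 0 <= rho ->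
  S < eta * x -> `|y| < eta * x -> `|x| < eps ->
  (E2 < r ^+ 2 -> `|rho - 2 * x| <= K * E2) ->
  [/\ S < 3 * eta * rho, `|y| < 3 * eta * rho & rho < 3 * eps].
Proof.
move=> K0 e0 e1 er eK et0 et1 ep0 ep1 S0 hE r0 hS hy hx hb.
have x0 : 0 < x by nra.
move: hx; rewrite ltr_norml => /andP [_ hx].
have y2 : y ^+ 2 <= (eta * x) ^+ 2.
  by move: hy; rewrite ltr_norml => /andP [? ?]; nra.
have a1 : eta * x <= eps0 * x by nra.
have a2 : eta * x <= 1 by nra.
have a3 : (eta * x) ^+ 2 <= eta * x by nra.
have a4 : x ^+ 2 <= eps0 * x by nra.
have hE2 : E2 <= 3 * eps0 * x by rewrite hE; nra.
have hr : E2 < r ^+ 2 by nra.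
move: (hb hr); rewrite ler_norml => /andP [h1 h2].
have h3 : K * E2 <= x * (3 / 8) by nra.
move: hy; rewrite ltr_norml => /andP [hy1 hy2].
split; first by nra.
  by rewrite ltr_norml; apply/andP; split; nra.
by nra.
Qed.

Lemma incl1 (K r eps0 eta eps x y S rho E2 : R) :
  0 < K -> 0 < eps0 -> eps0 <= 1 -> 8 * K * eps0 <= 1 -> 8 * K * r <= 1 ->
  0 < eta -> eta < eps0 -> 0 < eps -> eps < eps0 ->
  0 <= S -> E2 = S + x ^+ 2 + y ^+ 2 -> 0 < rho -> `|x| < r ->
  S < eta * rho -> `|y| < eta * rho -> rho < eps ->
  `|rho - 2 * x| <= K * E2 ->
  [/\ S < 3 * eta * x, `|y| < 3 * eta * x & `|x| < 3 * eps].
Proof.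
move=> K0 e0 e1 eK rK et0 et1 ep0 ep1 S0 hE r0 hx hS hy hr hb.
have y2 : y ^+ 2 <= (eta * rho) ^+ 2.
  by move: hy; rewrite ltr_norml => /andP [? ?]; nra.
have x2 : K * x ^+ 2 <= `|x| / 8.
  have ax : 0 <= `|x| by [].
  have kx : K * `|x| <= 1 / 8 by nra.
  rewrite -real_normK ?num_real //; nra.
have b1 : K * eta <= 1 / 8 by nra.
have b2 : K * S <= rho / 8 by nra.
have b3 : eta * rho <= 1 by nra.
have b4 : K * (eta * rho) ^+ 2 <= rho / 8 by nra.
have hE2 : K * E2 <= rho / 4 + `|x| / 8.
  rewrite hE; nra.
move: hb; rewrite ler_norml => /andP [h1 h2].
have x0 : 0 < x.
  case: (ltrP 0 x) => // hx0.
  move: x2 hE2; rewrite ler0_norm //; nra.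
move: x2 hE2; rewrite gtr0_norm // => x2 hE2.
move: hy; rewrite ltr_norml => /andP [hy1 hy2].
split; first by nra.
  by rewrite ltr_norml; apply/andP; split; nra.
by nra.
Qed.
End S2.
Section S3.
Variables (R : realType) (m : nat).
Local Notation N := m.+2.
Implicit Types (z v : Cn R N).

Lemma zk_last z : zk z m.+1 = zc z ord_max.
Proof. by rewrite /zk insubT //= => ?; congr zc; apply: val_inj. Qed.

Lemma zk_low z (k : 'I_m.+1) : zk z k = zc z (widen_ord (leqnSn _) k).
Proof.
rewrite /zk insubT /=; first by rewrite (leq_trans (ltn_ord k)).
by move=> ?; congr zc; apply: val_inj.
Qed.

Definition Sp z := \sum_(k < m.+1) cabs2 (zk z k).

Lemma enorm2 z : enorm z ^+ 2 = Sp z + cabs2 (zc z ord_max).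
Proof.
rewrite /enorm sqr_sqrtr; last by rewrite sumr_ge0 // => k _; rewrite /cabs2 addr_ge0 ?sqr_ge0.
by rewrite big_ord_recr /Sp; congr (_ + _); apply: eq_bigr => k _; rewrite zk_low.
Qed.
Definition dl (k : 'I_N) : R[i] := if k == ord_max then 1 else 0.

Lemma zc_mkCn (f : 'I_N -> R[i]) k : zc (mkCn f) k = f k.
Proof. by rewrite /zc /mkCn /= !mxE; case: (f k). Qed.

Section rho.
Variable rho : Cn R N -> R.
Hypothesis Dv : forall v, 'D_v rho 0 = 2 * v.1 0 ord_max.

Lemma dz0 k : dz rho 0 k = dl k.
Proof.
rewrite /dz !Dv /ex /ey /mkCn /= !mxE /dl eq_sym.
by case: (k == ord_max); apply/eqP; rewrite eq_complex /= ?mulr1 ?mulr0 ?mul0r ?oppr0 ?eqxx ?andbT ?divff.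
Qed.

Lemma norm_dzb0 : norm_dzb rho 0 = 1.
Proof.
rewrite /norm_dzb (bigD1 ord_max) //= big1 ?addr0.
  by rewrite /dzb dz0 /dl eqxx /cabs2 /= oppr0 expr1n expr0n addr0 sqrtr1.
by move=> k /negbTE hk; rewrite /dzb dz0 /dl hk /cabs2 /= oppr0 expr0n addr0.
Qed.

Lemma nvec0 : nvec rho 0 = mkCn dl.
Proof.
rewrite /nvec norm_dzb0; congr mkCn; apply: funext => k.
rewrite /dzb dz0 divr1 /dl; case: (k == ord_max) => //=.
  by apply/eqP; rewrite eq_complex /= oppr0 !eqxx.
by apply/eqP; rewrite eq_complex /= oppr0 !eqxx.
Qed.

Lemma pair0 w : pair_drho rho 0 w = zc w ord_max.
Proof.
rewrite /pair_drho (bigD1 ord_max) //= big1 ?addr0.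
  by rewrite dz0 /dl eqxx mul1r.
by move=> k /negbTE hk; rewrite dz0 /dl hk mul0r.
Qed.

Lemma tdec0 tau : tdec rho 0 tau = zc tau ord_max.
Proof.
by rewrite /tdec !pair0 subr0 nvec0 zc_mkCn /dl eqxx divr1.
Qed.

Lemma zcB z w k : zc (z - w) k = zc z k - zc w k.
Proof. by rewrite /zc /= !mxE. Qed.

Lemma zcw tau k : zc (wdec rho 0 tau) k = if k == ord_max then 0 else zc tau k.
Proof.
rewrite /wdec tdec0 nvec0 zcB !zc_mkCn /dl.
by case: eqP => [->|_]; rewrite ?mulr1 ?subrr ?mulr0 ?subr0.
Qed.

Lemma wdec0 tau : enorm (wdec rho 0 tau - 0) = Num.sqrt (Sp tau).
Proof.
rewrite subr0 /enorm big_ord_recr /= zcw eqxx.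
have -> : cabs2 (0 : R[i]) = 0 by rewrite /cabs2 /= expr0n addr0.
rewrite addr0 /Sp; congr Num.sqrt; apply: eq_bigr => k _.
rewrite zk_low zcw.
have -> : (widen_ord (leqnSn m.+1) k == ord_max) = false.
  by apply/negbTE; rewrite -val_eqE /= neq_ltn ltn_ord.
by [].
Qed.
End rho.
End S3.

Unset Implicit Arguments.
Set Strict Implicit.

Theorem lemma6 (R : realType) (n : nat) (hn : (2 <= n)%N)
  (rho : Cn R n -> R) (A : 'M[complex R]_n) :
  Ck 3 rho ->
  strongly_convex_domain rho ->
  rho 0 = 0 ->
  is_hermitian A -> posdef_herm A ->
  (exists M r : R, 0 < r /\ forall z : Cn R n, enorm z < r ->
     `|rho z - (2 * complex.Re (zk z n.-1) + complex.Re (herm A z))|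
       <= M * enorm z ^+ 3) ->
  exists c eps0 r : R, [/\ 0 < c, 0 < eps0, 0 < r &
    forall eta eps : R, 0 < eta < eps0 -> 0 < eps < eps0 ->
      (De rho 0 eta eps `&` [set z | enorm z < r] `<=` D0 rho (c * eta) (c * eps)) /\
      (D0 rho eta eps `<=` De rho 0 (c * eta) (c * eps))].
Proof.
case: n hn rho A => [|[|m]] // _ rho A.
move=> _ _ rho0 _ _ [M [r [r0 hM]]].
have [KA [KA0 hKA]] := herm_bnd A.
pose K := `|M| + KA + 1.
have K0 : 0 < K by rewrite /K ltr_wpDl ?addr_ge0.
pose rb := Order.min r 1.
have rb0 : 0 < rb by rewrite lt_min r0 ltr01.
have hb : forall z : Cn R m.+2, enorm z < rb ->
    `|rho z - 2 * z.1 0 ord_max| <= K * enorm z ^+ 2.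
  move=> z; rewrite lt_min => /andP [hr h1].
  have := hM z hr; rewrite zk_last /=.
  have := hKA z.
  have E0 := enorm_ge0 z.
  set E := enorm z; set H := complex.Re (herm A z); set x := z.1 0 ord_max.
  move=> hH hR.
  have hM3 : M * E ^+ 3 <= `|M| * E ^+ 2.
    apply: le_trans (_ : `|M| * E ^+ 3 <= _).
      by rewrite ler_wpM2r ?exprn_ge0 // ler_norm.
    by rewrite ler_wpM2l // exprS ler_piMl ?exprn_ge0 // ltW.
  have -> : rho z - 2 * x = (rho z - (2 * x + H)) + H by ring.
  apply: le_trans (ler_normD _ _) _.
  rewrite /K.
  have : 0 <= E ^+ 2 by rewrite exprn_ge0.
  lra.
have Dv : forall v : Cn R m.+2, 'D_v rho 0 = 2 * v.1 0 ord_max.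
  apply: (D_lin (L := fun z => 2 * z.1 0 ord_max) rb0 rho0 _ hb).
  by move=> h v /=; rewrite mxE; ring.
pose eps0 := Order.min (Order.min 1 (rb / 2)) (1 / (8 * K)).
pose ro := Order.min rb (1 / (8 * K)).
have K8 : 0 < 8 * K by rewrite mulr_gt0.
have e00 : 0 < eps0 by rewrite !lt_min ltr01 divr_gt0 //= divr_gt0.
have ro0 : 0 < ro by rewrite lt_min rb0 divr_gt0.
have e01 : eps0 <= 1 by rewrite /eps0 !ge_min lexx.
have e02 : 2 * eps0 <= rb.
  rewrite -ler_pdivlMl // mulrC /eps0 !ge_min; apply/orP; left; apply/orP; right.
  by rewrite mulrC.
have e03 : 8 * K * eps0 <= 1.
  by rewrite -ler_pdivlMl // mulr1 /eps0 ge_min mul1r lexx orbT.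
have ro1 : 8 * K * ro <= 1.
  by rewrite -ler_pdivlMl // mulr1 /ro ge_min mul1r lexx orbT.
have ro2 : ro <= rb by rewrite /ro ge_min lexx.
exists 3, eps0, ro; split => //.
move=> eta eps /andP [et0 et1] /andP [ep0 ep1]; split.
- move=> tau [[nO [hw [hi hr]]] hn].
  have rt0 : 0 <= rho tau by rewrite leNgt; apply/negP.
  rewrite wdec0 // in hw; rewrite tdec0 // /= in hi.
  have ep : 0 < eta * rho tau.
    rewrite ltNge; apply/negP => h; move: hw; rewrite (ler0_sqrtr h).
    by move=> hw'; have := sqrtr_ge0 (Sp tau); rewrite leNgt hw'.
  have rp : 0 < rho tau by move: ep; rewrite pmulr_rgt0.
  rewrite ltr_sqrt // in hw.
  have [hx1 _] := coord_le tau ord_max.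
  have hE := enorm2 tau.
  have := hb tau (lt_le_trans hn ro2).
  rewrite hE /cabs2 /= addrA => hb'.
  have [c1 c2 c3] := incl1 K0 e00 e01 e03 ro1 et0 et1 ep0 ep1 (sumr_ge0 _ (fun k _ => cabs2_ge0 _))
     (erefl _) rp (le_lt_trans hx1 hn) hw hi hr hb'.
  split => //; rewrite zk_last /=; split => //.
- move=> tau [nO [hS [hy hx]]].
  rewrite zk_last /= in hy hx hS.
  have rt0 : 0 <= rho tau by rewrite leNgt; apply/negP.
  have hE := enorm2 tau.
  have hb' : Sp tau + tau.1 0 ord_max ^+ 2 + tau.2 0 ord_max ^+ 2 < rb ^+ 2 ->
      `|rho tau - 2 * tau.1 0 ord_max| <=
        K * (Sp tau + tau.1 0 ord_max ^+ 2 + tau.2 0 ord_max ^+ 2).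
    move=> h; have := hb tau; rewrite hE /cabs2 /= -addrA; apply.
    by rewrite -(ltr_pXn2r (_ : (0 < 2)%N)) ?nnegrE ?enorm_ge0 ?ltW // hE /cabs2 /= addrA.
  have [c1 c2 c3] := incl2 K0 e00 e01 e02 e03 et0 et1 ep0 ep1 (sumr_ge0 _ (fun k _ => cabs2_ge0 _))
     (erefl _) rt0 hS hy hx hb'.
  split => //; rewrite wdec0 // tdec0 //=; split => //.
  rewrite ltr_sqrt //; apply: le_lt_trans c1; exact: sumr_ge0 _ (fun k _ => cabs2_ge0 _).
Qed.
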